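(* Suppose the functional $\tilde I[\tilde q]=\int_a^b\tilde L(x,\tilde q(x),\dot{\tilde q}(x))\,dx$ is invariant, in the sense (with transformation of the independent variable) described in the context, under the one-parameter group of infinitesimal transformations $\hat x=x+\epsilon\tau(x,\tilde q)+o(\epsilon)$, $\tilde{\hat q}(x)=\tilde q(x)+\epsilon\tilde\zeta(x,\tilde q)+o(\epsilon)$, for every fuzzy-valued function $\tilde q$ with $C^2$ level functions. For $r\in[0,1]$ define, with $\underline L^r,\overline L^r$ and their partial derivatives evaluated at $(x,\underline q^r,\overline q^r,\dot{\underline q}^r,\dot{\overline q}^r)$ and $\underline\zeta^r,\overline\zeta^r,\tau$ evaluated at $(x,\underline q^r,\overline q^r)$, $$\underline C^r=\partial_4\underline L^r\,\underline\zeta^r+\partial_5\underline L^r\,\overline\zeta^r+\big[\underline L^r-\partial_4\underline L^r\,\dot{\underline q}^r-\partial_5\underline L^r\,\dot{\overline q}^r\big]\tau,$$ $$\overline C^r=\partial_4\overline L^r\,\underline\zeta^r+\partial_5\overline L^r\,\overline\zeta^r+\big[\overline L^r-\partial_4\overline L^r\,\dot{\underline q}^r-\partial_5\overline L^r\,\dot{\overline q}^r\big]\tau.$$ Then the fuzzy quantity $\tilde C$ with these lower and upper bounds is conserved: for every $\tilde q$ with $C^2$ level functions satisfying the fuzzy Euler–Lagrange equations, $\frac{d}{dx}\underline C^r=\frac{d}{dx}\overline C^r=0$ for all $r\in[0,1]$.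
   Context: A fuzzy number is a map $\tilde a:\mathbb R\to[0,1]$ that is normal, fuzzy convex, upper semicontinuous and has compact support; its $r$-level sets are compact intervals $[\underline a^r,\overline a^r]$. A fuzzy-valued function $\tilde q$ on $[a,b]$ is described by its level functions $\underline q^r(x),\overline q^r(x)$, $r\in[0,1]$; dots denote derivatives with respect to the independent variable. The fuzzy Lagrangian is given levelwise by $C^2$ functions $\underline L^r,\overline L^r:[a,b]\times\mathbb R^4\to\mathbb R$ evaluated at $(x,\underline q^r,\overline q^r,\dot{\underline q}^r,\dot{\overline q}^r)$, and $\tilde I$ has level endpoints $\int_a^b\underline L^rdx$, $\int_a^b\overline L^rdx$. $\partial_i$ is the partial derivative with respect to the $i$-th argument of $(x,u,v,p,w)$. Fuzzy Euler–Lagrange equations: for all $r$, $\partial_2\underline L^r-\frac{d}{dx}\partial_4\underline L^r=0$, $\partial_3\underline L^r-\frac{d}{dx}\partial_5\underline L^r=0$, $\partial_2\overline L^r-\frac{d}{dx}\partial_4\overline L^r=0$, $\partial_3\overline L^r-\frac{d}{dx}\partial_5\overline L^r=0$. Transformations: $\tau:[a,b]\times\mathbb R^2\to\mathbb R$ and, for each $r$, $\underline\zeta^r,\overline\zeta^r:[a,b]\times\mathbb R^2\to\mathbb R$ are $C^1$. For $\epsilon>0$ and each $r$, the new independent variable is $\hat x(x)=x+\epsilon\tau(x,\underline q^r(x),\overline q^r(x))+o(\epsilon)$ and the transformed level functions are defined by $\underline{\hat q}^r(\hat x(x))=\underline q^r(x)+\epsilon\underline\zeta^r(x,\underline q^r(x),\overline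 q^r(x))+o(\epsilon)$, $\overline{\hat q}^r(\hat x(x))=\overline q^r(x)+\epsilon\overline\zeta^r(x,\underline q^r(x),\overline q^r(x))+o(\epsilon)$, with remainders $C^1$ and $o(\epsilon)$ together with their derivatives; $\dot{\underline{\hat q}}^r(\hat x)$ denotes the derivative with respect to $\hat x$. Invariance: for all $r\in[0,1]$, every $[t_a,t_b]\subseteq[a,b]$ and every $\epsilon>0$, $\int_{t_a}^{t_b}\underline L^r(x,\underline q^r(x),\overline q^r(x),\dot{\underline q}^r(x),\dot{\overline q}^r(x))dx=\int_{\hat x(t_a)}^{\hat x(t_b)}\underline L^r(\hat x,\underline{\hat q}^r(\hat x),\overline{\hat q}^r(\hat x),\dot{\underline{\hat q}}^r(\hat x),\dot{\overline{\hat q}}^r(\hat x))d\hat x$, and likewise for $\overline L^r$. *)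

(* Defs.v *)
From Stdlib Require Import Reals Lra.
From Stdlib Require Import ClassicalEpsilon.
Open Scope R_scope.

Definition differentiable_at (f : R -> R) (x : R) : Prop :=
  exists l, derivable_pt_lim f x l.

(** The derivative of f at x (meaningful where f is differentiable). *)
Definition deriv (f : R -> R) (x : R) : R :=
  epsilon (inhabits 0) (fun l => derivable_pt_lim f x l).

Definition C2_fun (f : R -> R) : Prop :=
  (forall x, differentiable_at f x) /\
  (forall x, differentiable_at (deriv f) x) /\
  continuity (deriv (deriv f)).

(** * Functions of 5 real variables (x,u,v,p,w); partial derivatives
    indexed 1..5 as in the paper. *)
Definition fun5 := R -> R -> R -> R -> R -> R.

Definition section5 (f : fun5) (i : nat) (x u v p w : R) : R -> R :=
  match i with
  | 1%nat => fun t => f t u v p w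
  | 2%nat => fun t => f x t v p w
  | 3%nat => fun t => f x u t p w
  | 4%nat => fun t => f x u v t w
  | _ => fun t => f x u v p t
  end.

Definition coord5 (i : nat) (x u v p w : R) : R :=
  match i with
  | 1%nat => x | 2%nat => u | 3%nat => v | 4%nat => p | _ => w
  end.

Definition partial5 (f : fun5) (i : nat) : fun5 :=
  fun x u v p w => deriv (section5 f i x u v p w) (coord5 i x u v p w).

Definition continuous5 (g : fun5) : Prop :=
  forall x u v p w eps, 0 < eps -> exists d, 0 < d /\
    forall x' u' v' p' w',
      Rabs (x' - x) < d -> Rabs (u' - u) < d -> Rabs (v' - v) < d ->
      Rabs (p' - p) < d -> Rabs (w' - w) < d ->
      Rabs (g x' u' v' p' w' - g x u v p w) < eps.

Definition C1_5 (f : fun5) : Prop :=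
  continuous5 f /\
  forall i, (1 <= i <= 5)%nat ->
    (forall x u v p w, differentiable_at (section5 f i x u v p w) (coord5 i x u v p w)) /\
    continuous5 (partial5 f i).

Definition C2_5 (f : fun5) : Prop :=
  C1_5 f /\ forall i, (1 <= i <= 5)%nat -> C1_5 (partial5 f i).

Definition fun3 := R -> R -> R -> R.

Definition section3 (f : fun3) (i : nat) (x u v : R) : R -> R :=
  match i with
  | 1%nat => fun t => f t u v
  | 2%nat => fun t => f x t v
  | _ => fun t => f x u t
  end.

Definition coord3 (i : nat) (x u v : R) : R :=
  match i with 1%nat => x | 2%nat => u | _ => v end.

Definition partial3 (f : fun3) (i : nat) : fun3 :=
  fun x u v => deriv (section3 f i x u v) (coord3 i x u v).

Definition continuous3 (g : fun3) : Prop :=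
  forall x u v eps, 0 < eps -> exists d, 0 < d /\
    forall x' u' v',
      Rabs (x' - x) < d -> Rabs (u' - u) < d -> Rabs (v' - v) < d ->
      Rabs (g x' u' v' - g x u v) < eps.

Definition C1_3 (f : fun3) : Prop :=
  continuous3 f /\
  forall i, (1 <= i <= 3)%nat ->
    (forall x u v, differentiable_at (section3 f i x u v) (coord3 i x u v)) /\
    continuous3 (partial3 f i).

Definition fuzzy_number (A : R -> R) : Prop :=
  (forall y, 0 <= A y <= 1) /\
  (exists y, A y = 1) /\
  (forall y z l, 0 <= l <= 1 -> Rmin (A y) (A z) <= A (l * y + (1 - l) * z)) /\
  (forall y eps, 0 < eps -> exists d, 0 < d /\
      forall z, Rabs (z - y) < d -> A z < A y + eps) /\
  (exists M, forall y, 0 < A y -> Rabs y <= M).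

(** y belongs to the r-level set of A: {A >= r} for r in (0,1],
    closure of the support {A > 0} for r = 0. *)
Definition in_level (A : R -> R) (r y : R) : Prop :=
  (0 < r /\ r <= A y) \/
  (r = 0 /\ forall d, 0 < d -> exists z, Rabs (z - y) < d /\ 0 < A z).

(** qt : [a,b] -> fuzzy numbers, with level functions ql r, qu r:
    [qt x]^r = [ql r x, qu r x]. *)
Definition fuzzy_valued_with_levels (a b : R) (qt : R -> R -> R)
    (ql qu : R -> R -> R) : Prop :=
  forall x, a <= x <= b ->
    fuzzy_number (qt x) /\
    forall r, 0 <= r <= 1 -> forall y, in_level (qt x) r y <-> ql r x <= y <= qu r x.

Definition C2_levels (ql qu : R -> R -> R) : Prop :=
  forall r, 0 <= r <= 1 -> C2_fun (ql r) /\ C2_fun (qu r).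

Definition along (L : fun5) (ql qu : R -> R) : R -> R :=
  fun x => L x (ql x) (qu x) (deriv ql x) (deriv qu x).

Definition fuzzy_EL (a b : R) (Ll Lu : R -> fun5) (ql qu : R -> R -> R) : Prop :=
  forall r, 0 <= r <= 1 -> forall x, a <= x <= b ->
    derivable_pt_lim (along (partial5 (Ll r) 4) (ql r) (qu r)) x
                     (along (partial5 (Ll r) 2) (ql r) (qu r) x) /\
    derivable_pt_lim (along (partial5 (Ll r) 5) (ql r) (qu r)) x
                     (along (partial5 (Ll r) 3) (ql r) (qu r) x) /\
    derivable_pt_lim (along (partial5 (Lu r) 4) (ql r) (qu r)) x
                     (along (partial5 (Lu r) 2) (ql r) (qu r) x) /\
    derivable_pt_lim (along (partial5 (Lu r) 5) (ql r) (qu r)) x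
                     (along (partial5 (Lu r) 3) (ql r) (qu r) x).

Definition small_rem (a b : R) (rho : R -> R -> R) : Prop :=
  forall eta, 0 < eta -> exists d, 0 < d /\
    forall eps, 0 < eps < d -> forall x, a <= x <= b -> Rabs (rho eps x) <= eta * eps.

Definition rem_ok (a b : R) (rho drho : R -> R -> R) : Prop :=
  (forall eps x, 0 < eps -> derivable_pt_lim (rho eps) x (drho eps x)) /\
  (forall eps, 0 < eps -> continuity (drho eps)) /\
  small_rem a b rho /\ small_rem a b drho.

Definition integral_eq (f : R -> R) (a b : R) (g : R -> R) (c d : R) : Prop :=
  exists (p1 : Riemann_integrable f a b) (p2 : Riemann_integrable g c d),
    RiemannInt p1 = RiemannInt p2.

Definition fuzzy_invariant (a b : R) (Ll Lu : R -> fun5) (tau : fun3)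
    (zl zu : R -> fun3) : Prop :=
  forall qt ql qu, fuzzy_valued_with_levels a b qt ql qu -> C2_levels ql qu ->
  forall r, 0 <= r <= 1 ->
  exists (X Ql Qu rho0 rho1 rho2 drho0 drho1 drho2 : R -> R -> R),
    rem_ok a b rho0 drho0 /\ rem_ok a b rho1 drho1 /\ rem_ok a b rho2 drho2 /\
    (forall eps x, 0 < eps -> a <= x <= b ->
       X eps x = x + eps * tau x (ql r x) (qu r x) + rho0 eps x /\
       Ql eps (X eps x) = ql r x + eps * zl r x (ql r x) (qu r x) + rho1 eps x /\
       Qu eps (X eps x) = qu r x + eps * zu r x (ql r x) (qu r x) + rho2 eps x /\
       differentiable_at (Ql eps) (X eps x) /\
       differentiable_at (Qu eps) (X eps x)) /\
    (forall eps ta tb, 0 < eps -> a <= ta -> ta <= tb -> tb <= b ->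
       integral_eq (along (Ll r) (ql r) (qu r)) ta tb
                   (along (Ll r) (Ql eps) (Qu eps)) (X eps ta) (X eps tb) /\
       integral_eq (along (Lu r) (ql r) (qu r)) ta tb
                   (along (Lu r) (Ql eps) (Qu eps)) (X eps ta) (X eps tb)).

Definition noether_C (L : fun5) (tau zl zu : fun3) (ql qu : R -> R) : R -> R :=
  fun x =>
    along (partial5 L 4) ql qu x * zl x (ql x) (qu x)
    + along (partial5 L 5) ql qu x * zu x (ql x) (qu x)
    + (along L ql qu x - along (partial5 L 4) ql qu x * deriv ql x
       - along (partial5 L 5) ql qu x * deriv qu x) * tau x (ql x) (qu x).

(* Main.v *)
Require Import Defs.
From Stdlib Require Import Reals Lra Lia.
From Stdlib Require Import ClassicalEpsilon.
Open Scope R_scope.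


Lemma deriv_spec f x : differentiable_at f x -> derivable_pt_lim f x (deriv f x).
Proof. intros H. unfold deriv. apply (epsilon_spec (inhabits 0) (fun l => derivable_pt_lim f x l)). exact H. Qed.

Lemma deriv_eq f x l : derivable_pt_lim f x l -> deriv f x = l.
Proof. intros H. apply (uniqueness_limite f x). apply deriv_spec. exists l; exact H. exact H. Qed.

Lemma cont_intro f x : (forall e, 0 < e -> exists d, 0 < d /\ forall y, Rabs (y - x) < d -> Rabs (f y - f x) < e) -> continuity_pt f x.
Proof.
  intros H e He. destruct (H e He) as [d [Hd H']]. exists d; split; [lra|].
  intros y [_ Hy]. simpl in *. unfold R_dist in *. apply H'. exact Hy.
Qed.

Lemma cont_elim f x : continuity_pt f x -> forall e, 0 < e -> exists d, 0 < d /\ forall y, Rabs (y - x) < d -> Rabs (f y - f x) < e.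
Proof.
  intros H e He. destruct (H e He) as [d [Hd H']]. exists d; split; [lra|].
  intros y Hy. destruct (Req_dec y x) as [->|Hne].
  - unfold Rminus; rewrite Rplus_opp_r, Rabs_R0; exact He.
  - apply (H' y). split; [split; [exact I| congruence] | exact Hy].
Qed.

Lemma der_cont f x l : derivable_pt_lim f x l -> continuity_pt f x.
Proof. intros H. apply derivable_continuous_pt. exists l. exact H. Qed.

Lemma lim_intro f D l : (forall e, 0 < e -> exists a, 0 < a /\ forall x, D x -> Rabs x < a -> Rabs (f x - l) < e) -> limit1_in f D l 0.
Proof.
  intros H e He. destruct (H e He) as [a [Ha H']]. exists a; split; [lra|].
  intros x [Dx Hx]. simpl in *. unfold R_dist in *. rewrite Rminus_0_r in Hx. apply H'; auto.
Qed.

Lemma lim_elim f D l : limit1_in f D l 0 -> forall e, 0 < e -> exists a, 0 < a /\ forall x, D x -> Rabs x < a -> Rabs (f x - l) < e.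
Proof.
  intros H e He. destruct (H e He) as [a [Ha H']]. exists a; split; [lra|].
  intros x Dx Hx. apply (H' x). split; auto. simpl; unfold R_dist. rewrite Rminus_0_r. exact Hx.
Qed.

Lemma lim_ext f g D l : (forall x, D x -> f x = g x) -> limit1_in f D l 0 -> limit1_in g D l 0.
Proof.
  intros E H. apply lim_intro. intros e He. destruct (lim_elim _ _ _ H e He) as [a [Ha H']].
  exists a; split; auto. intros x Dx Hx. rewrite <- E by auto. auto.
Qed.

Lemma lim_const D c : limit1_in (fun _ => c) D c 0.
Proof. apply lim_intro. intros e He. exists 1; split; [lra|]. intros. unfold Rminus; rewrite Rplus_opp_r, Rabs_R0; lra. Qed.

Lemma lim_id D : limit1_in (fun x => x) D 0 0.
Proof. apply lim_intro. intros e He. exists e; split; auto. intros. rewrite Rminus_0_r; auto. Qed.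

Lemma lim_plus f g D l1 l2 : limit1_in f D l1 0 -> limit1_in g D l2 0 -> limit1_in (fun x => f x + g x) D (l1 + l2) 0.
Proof. intros; apply limit_plus; auto. Qed.
Lemma lim_mult f g D l1 l2 : limit1_in f D l1 0 -> limit1_in g D l2 0 -> limit1_in (fun x => f x * g x) D (l1 * l2) 0.
Proof. intros; apply limit_mul; auto. Qed.
Lemma lim_opp f D l : limit1_in f D l 0 -> limit1_in (fun x => - f x) D (- l) 0.
Proof. intros; apply limit_Ropp; auto. Qed.
Lemma lim_minus f g D l1 l2 : limit1_in f D l1 0 -> limit1_in g D l2 0 -> limit1_in (fun x => f x - g x) D (l1 - l2) 0.
Proof. intros; apply limit_minus; auto. Qed.
Lemma lim_inv f D l : limit1_in f D l 0 -> l <> 0 -> limit1_in (fun x => / f x) D (/ l) 0.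
Proof. intros; apply limit_inv; auto. Qed.

Lemma der_lim f x l : derivable_pt_lim f x l -> limit1_in (fun h => (f (x + h) - f x) / h) (fun h => h <> 0) l 0.
Proof.
  intros H. apply lim_intro. intros e He. destruct (H e He) as [d Hd].
  exists d; split; [apply cond_pos|]. intros h Hh Ha. apply Hd; auto.
Qed.

Lemma lim_der f x l : limit1_in (fun h => (f (x + h) - f x) / h) (fun h => h <> 0) l 0 -> derivable_pt_lim f x l.
Proof.
  intros H e He. destruct (lim_elim _ _ _ H e He) as [a [Ha H']].
  exists (mkposreal a Ha). intros h Hh Hh'. apply H'; auto.
Qed.

Lemma der_ext_local F G s l d : 0 < d -> (forall y, Rabs (y - s) < d -> F y = G y) -> derivable_pt_lim F s l -> derivable_pt_lim G s l.
Proof.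
  intros Hd E H e He. destruct (H e He) as [d' Hd'].
  assert (Hm : 0 < Rmin d d') by (apply Rmin_pos; [lra| apply cond_pos]).
  exists (mkposreal _ Hm). intros h Hh Ha. simpl in Ha.
  rewrite <- !E. apply Hd'; auto. eapply Rlt_le_trans; [exact Ha| apply Rmin_r].
  unfold Rminus; rewrite Rplus_opp_r, Rabs_R0; lra.
  replace (s + h - s) with h by ring. eapply Rlt_le_trans; [exact Ha| apply Rmin_l].
Qed.

Lemma dval F x l l' : derivable_pt_lim F x l -> l = l' -> derivable_pt_lim F x l'.
Proof. intros H <-; exact H. Qed.
Lemma dplus f g x l1 l2 : derivable_pt_lim f x l1 -> derivable_pt_lim g x l2 -> derivable_pt_lim (fun y => f y + g y) x (l1 + l2).
Proof. intros; apply (derivable_pt_lim_plus f g); auto. Qed.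
Lemma dminus f g x l1 l2 : derivable_pt_lim f x l1 -> derivable_pt_lim g x l2 -> derivable_pt_lim (fun y => f y - g y) x (l1 - l2).
Proof. intros; apply (derivable_pt_lim_minus f g); auto. Qed.
Lemma dmult f g x l1 l2 : derivable_pt_lim f x l1 -> derivable_pt_lim g x l2 -> derivable_pt_lim (fun y => f y * g y) x (l1 * g x + f x * l2).
Proof. intros; apply (derivable_pt_lim_mult f g); auto. Qed.
Lemma dconst c x : derivable_pt_lim (fun _ => c) x 0.
Proof. apply derivable_pt_lim_const. Qed.
Lemma did x : derivable_pt_lim (fun y => y) x 1.
Proof. apply derivable_pt_lim_id. Qed.

Lemma cplus f g x : continuity_pt f x -> continuity_pt g x -> continuity_pt (fun y => f y + g y) x.
Proof. intros; apply (continuity_pt_plus f g); auto. Qed.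
Lemma cminus f g x : continuity_pt f x -> continuity_pt g x -> continuity_pt (fun y => f y - g y) x.
Proof. intros; apply (continuity_pt_minus f g); auto. Qed.
Lemma cmult f g x : continuity_pt f x -> continuity_pt g x -> continuity_pt (fun y => f y * g y) x.
Proof. intros; apply (continuity_pt_mult f g); auto. Qed.
Lemma cdiv f g x : continuity_pt f x -> continuity_pt g x -> g x <> 0 -> continuity_pt (fun y => f y / g y) x.
Proof. intros; apply (continuity_pt_div f g); auto. Qed.
Lemma cconst c x : continuity_pt (fun _ => c) x.
Proof. apply continuity_pt_const. intros a b; reflexivity. Qed.
Lemma cid x : continuity_pt (fun y => y) x.
Proof. apply derivable_continuous_pt. apply derivable_pt_id. Qed.


Definition hasP5 (f D1 D2 D3 D4 D5 : fun5) := forall x u v p w,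
  derivable_pt_lim (fun t => f t u v p w) x (D1 x u v p w) /\
  derivable_pt_lim (fun t => f x t v p w) u (D2 x u v p w) /\
  derivable_pt_lim (fun t => f x u t p w) v (D3 x u v p w) /\
  derivable_pt_lim (fun t => f x u v t w) p (D4 x u v p w) /\
  derivable_pt_lim (fun t => f x u v p t) w (D5 x u v p w).

Definition cont5_at (g : fun5) x u v p w := forall eps, 0 < eps -> exists d, 0 < d /\
    forall x' u' v' p' w',
      Rabs (x' - x) < d -> Rabs (u' - u) < d -> Rabs (v' - v) < d ->
      Rabs (p' - p) < d -> Rabs (w' - w) < d ->
      Rabs (g x' u' v' p' w' - g x u v p w) < eps.

Lemma mvt_step g dg c h K eta : (forall t, derivable_pt_lim g t (dg t)) ->
  (forall th, Rabs (th - c) <= Rabs h -> Rabs (dg th - K) <= eta) ->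
  Rabs (g (c + h) - g c - K * h) <= eta * Rabs h.
Proof.
  intros Hd Hb. destruct (Rtotal_order h 0) as [Hn|[H0|Hp]].
  - destruct (MVT_cor2 g dg (c + h) c) as [th [E Hth]]; [lra| intros; apply Hd |].
    replace (g (c + h) - g c - K * h) with ((dg th - K) * h) by lra.
    rewrite Rabs_mult. apply Rmult_le_compat_r; [apply Rabs_pos|]. apply Hb.
    rewrite (Rabs_left h) by lra. rewrite Rabs_left by lra. lra.
  - subst. rewrite Rplus_0_r, Rabs_R0. replace (g c - g c - K * 0) with 0 by ring. rewrite Rabs_R0; lra.
  - destruct (MVT_cor2 g dg c (c + h)) as [th [E Hth]]; [lra| intros; apply Hd |].
    replace (g (c + h) - g c - K * h) with ((dg th - K) * h) by lra.
    rewrite Rabs_mult. apply Rmult_le_compat_r; [apply Rabs_pos|]. apply Hb.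
    rewrite (Rabs_right h) by lra. rewrite Rabs_right by lra. lra.
Qed.

Lemma abs5 a1 a2 a3 a4 a5 b1 b2 b3 b4 b5 : Rabs a1 <= b1 -> Rabs a2 <= b2 -> Rabs a3 <= b3 -> Rabs a4 <= b4 -> Rabs a5 <= b5 ->
  Rabs (a1 + a2 + a3 + a4 + a5) <= b1 + b2 + b3 + b4 + b5.
Proof.
  intros. repeat (eapply Rle_trans; [apply Rabs_triang|]; apply Rplus_le_compat; auto).
Qed.

Lemma Rabs_sh a h : Rabs (a + h - a) = Rabs h.
Proof. f_equal; ring. Qed.
Lemma Rabs_z a : Rabs (a - a) = 0.
Proof. unfold Rminus; rewrite Rplus_opp_r; apply Rabs_R0. Qed.

Lemma olin5 f D1 D2 D3 D4 D5 : hasP5 f D1 D2 D3 D4 D5 -> forall x u v p w,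
  cont5_at D1 x u v p w -> cont5_at D2 x u v p w -> cont5_at D3 x u v p w ->
  cont5_at D4 x u v p w -> cont5_at D5 x u v p w ->
  forall eta, 0 < eta -> exists d, 0 < d /\ forall h1 h2 h3 h4 h5,
    Rabs h1 < d -> Rabs h2 < d -> Rabs h3 < d -> Rabs h4 < d -> Rabs h5 < d ->
    Rabs (f (x + h1) (u + h2) (v + h3) (p + h4) (w + h5) - f x u v p w
      - (D1 x u v p w * h1 + D2 x u v p w * h2 + D3 x u v p w * h3 + D4 x u v p w * h4 + D5 x u v p w * h5))
    <= eta * (Rabs h1 + Rabs h2 + Rabs h3 + Rabs h4 + Rabs h5).
Proof.
  intros HP x u v p w C1 C2 C3 C4 C5 eta He.
  destruct (C1 eta He) as [d1 [P1 Q1]]. destruct (C2 eta He) as [d2 [P2 Q2]].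
  destruct (C3 eta He) as [d3 [P3 Q3]]. destruct (C4 eta He) as [d4 [P4 Q4]].
  destruct (C5 eta He) as [d5 [P5 Q5]].
  set (d := Rmin d1 (Rmin d2 (Rmin d3 (Rmin d4 d5)))).
  assert (L1 : d <= d1) by (unfold d; apply Rmin_l).
  assert (L2 : d <= d2) by (unfold d; eapply Rle_trans; [apply Rmin_r|apply Rmin_l]).
  assert (L3 : d <= d3) by (unfold d; eapply Rle_trans; [apply Rmin_r|]; eapply Rle_trans; [apply Rmin_r|apply Rmin_l]).
  assert (L4 : d <= d4) by (unfold d; eapply Rle_trans; [apply Rmin_r|]; eapply Rle_trans; [apply Rmin_r|];
      eapply Rle_trans; [apply Rmin_r|apply Rmin_l]).
  assert (L5 : d <= d5) by (unfold d; eapply Rle_trans; [apply Rmin_r|]; eapply Rle_trans; [apply Rmin_r|];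
      eapply Rle_trans; [apply Rmin_r|apply Rmin_r]).
  assert (Hd : 0 < d) by (unfold d; repeat apply Rmin_pos; auto).
  exists d; split; auto. intros h1 h2 h3 h4 h5 H1 H2 H3 H4 H5.
  assert (S1 := mvt_step (fun t => f t (u+h2) (v+h3) (p+h4) (w+h5)) (fun t => D1 t (u+h2) (v+h3) (p+h4) (w+h5)) x h1 (D1 x u v p w) eta).
  assert (S2 := mvt_step (fun t => f x t (v+h3) (p+h4) (w+h5)) (fun t => D2 x t (v+h3) (p+h4) (w+h5)) u h2 (D2 x u v p w) eta).
  assert (S3 := mvt_step (fun t => f x u t (p+h4) (w+h5)) (fun t => D3 x u t (p+h4) (w+h5)) v h3 (D3 x u v p w) eta).
  assert (S4 := mvt_step (fun t => f x u v t (w+h5)) (fun t => D4 x u v t (w+h5)) p h4 (D4 x u v p w) eta).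
  assert (S5 := mvt_step (fun t => f x u v p t) (fun t => D5 x u v p t) w h5 (D5 x u v p w) eta).
  simpl in S1, S2, S3, S4, S5.
  lapply S1; [intro T1|intro t; apply (HP t _ _ _ _)].
  lapply S2; [intro T2|intro t; apply (HP _ t _ _ _)].
  lapply S3; [intro T3|intro t; apply (HP _ _ t _ _)].
  lapply S4; [intro T4|intro t; apply (HP _ _ _ t _)].
  lapply S5; [intro T5|intro t; apply (HP _ _ _ _ t)].
  clear S1 S2 S3 S4 S5.
  lapply T1; [intro U1| intros th Hth; left; apply Q1; rewrite ?Rabs_sh, ?Rabs_z; lra].
  lapply T2; [intro U2| intros th Hth; left; apply Q2; rewrite ?Rabs_sh, ?Rabs_z; lra].
  lapply T3; [intro U3| intros th Hth; left; apply Q3; rewrite ?Rabs_sh, ?Rabs_z; lra].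
  lapply T4; [intro U4| intros th Hth; left; apply Q4; rewrite ?Rabs_sh, ?Rabs_z; lra].
  lapply T5; [intro U5| intros th Hth; left; apply Q5; rewrite ?Rabs_sh, ?Rabs_z; lra].
  clear T1 T2 T3 T4 T5.
  assert (A := abs5 _ _ _ _ _ _ _ _ _ _ U1 U2 U3 U4 U5).
  eapply Rle_trans; [|eapply Rle_trans; [exact A| right; ring]].
  right. f_equal. ring.
Qed.


Lemma bound_from_lim g c (Dom : R -> Prop) : limit1_in (fun e => g e / e) Dom c 0 -> (forall e, Dom e -> e <> 0) ->
  exists a, 0 < a /\ forall e, Dom e -> Rabs e < a -> Rabs (g e) <= (Rabs c + 1) * Rabs e.
Proof.
  intros H HD. destruct (lim_elim _ _ _ H 1 Rlt_0_1) as [a [Ha H']]. exists a; split; auto.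
  intros e De Hea. specialize (H' e De Hea). assert (ne := HD e De).
  replace (g e) with ((g e / e) * e) by (field; auto). rewrite Rabs_mult.
  apply Rmult_le_compat_r; [apply Rabs_pos|].
  assert (Rabs (g e / e) <= Rabs (g e / e - c) + Rabs c).
  { replace (g e / e) with ((g e / e - c) + c) at 1 by ring. apply Rabs_triang. }
  lra.
Qed.

Lemma olim5 f D1 D2 D3 D4 D5 : hasP5 f D1 D2 D3 D4 D5 -> forall x u v p w,
  cont5_at D1 x u v p w -> cont5_at D2 x u v p w -> cont5_at D3 x u v p w ->
  cont5_at D4 x u v p w -> cont5_at D5 x u v p w ->
  forall (Dom : R -> Prop) g1 g2 g3 g4 g5 c1 c2 c3 c4 c5, (forall e, Dom e -> e <> 0) ->
  limit1_in (fun e => g1 e / e) Dom c1 0 -> limit1_in (fun e => g2 e / e) Dom c2 0 ->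
  limit1_in (fun e => g3 e / e) Dom c3 0 -> limit1_in (fun e => g4 e / e) Dom c4 0 ->
  limit1_in (fun e => g5 e / e) Dom c5 0 ->
  limit1_in (fun e => (f (x + g1 e) (u + g2 e) (v + g3 e) (p + g4 e) (w + g5 e) - f x u v p w) / e) Dom
    (D1 x u v p w * c1 + D2 x u v p w * c2 + D3 x u v p w * c3 + D4 x u v p w * c4 + D5 x u v p w * c5) 0.
Proof.
  intros HP x u v p w C1 C2 C3 C4 C5 Dom g1 g2 g3 g4 g5 c1 c2 c3 c4 c5 HD L1 L2 L3 L4 L5.
  set (Rm := fun e => (f (x + g1 e) (u + g2 e) (v + g3 e) (p + g4 e) (w + g5 e) - f x u v p w
      - (D1 x u v p w * g1 e + D2 x u v p w * g2 e + D3 x u v p w * g3 e + D4 x u v p w * g4 e + D5 x u v p w * g5 e)) / e).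
  assert (LR : limit1_in Rm Dom 0 0).
  { apply lim_intro. intros eps Heps.
    set (K := (Rabs c1 + 1) + (Rabs c2 + 1) + (Rabs c3 + 1) + (Rabs c4 + 1) + (Rabs c5 + 1)).
    assert (HK : 0 < K) by (unfold K; generalize (Rabs_pos c1) (Rabs_pos c2) (Rabs_pos c3) (Rabs_pos c4) (Rabs_pos c5); lra).
    assert (Heta : 0 < eps / (2 * K)) by (apply Rdiv_lt_0_compat; lra).
    destruct (olin5 f D1 D2 D3 D4 D5 HP x u v p w C1 C2 C3 C4 C5 _ Heta) as [d [Hd Hol]].
    destruct (bound_from_lim _ _ _ L1 HD) as [a1 [Ha1 B1]].
    destruct (bound_from_lim _ _ _ L2 HD) as [a2 [Ha2 B2]].
    destruct (bound_from_lim _ _ _ L3 HD) as [a3 [Ha3 B3]].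
    destruct (bound_from_lim _ _ _ L4 HD) as [a4 [Ha4 B4]].
    destruct (bound_from_lim _ _ _ L5 HD) as [a5 [Ha5 B5]].
    assert (HdK : 0 < d / K) by (apply Rdiv_lt_0_compat; lra).
    exists (Rmin (d / K) (Rmin a1 (Rmin a2 (Rmin a3 (Rmin a4 a5))))).
    split. { repeat apply Rmin_pos; auto. }
    intros e De He.
    assert (E1 : Rabs e < d / K) by (eapply Rlt_le_trans; [exact He| apply Rmin_l]).
    assert (E2 : Rabs e < Rmin a1 (Rmin a2 (Rmin a3 (Rmin a4 a5)))) by (eapply Rlt_le_trans; [exact He| apply Rmin_r]).
    assert (F1 : Rabs e < a1) by (eapply Rlt_le_trans; [exact E2| apply Rmin_l]).
    assert (E3 : Rabs e < Rmin a2 (Rmin a3 (Rmin a4 a5))) by (eapply Rlt_le_trans; [exact E2| apply Rmin_r]).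
    assert (F2 : Rabs e < a2) by (eapply Rlt_le_trans; [exact E3| apply Rmin_l]).
    assert (E4 : Rabs e < Rmin a3 (Rmin a4 a5)) by (eapply Rlt_le_trans; [exact E3| apply Rmin_r]).
    assert (F3 : Rabs e < a3) by (eapply Rlt_le_trans; [exact E4| apply Rmin_l]).
    assert (E5 : Rabs e < Rmin a4 a5) by (eapply Rlt_le_trans; [exact E4| apply Rmin_r]).
    assert (F4 : Rabs e < a4) by (eapply Rlt_le_trans; [exact E5| apply Rmin_l]).
    assert (F5 : Rabs e < a5) by (eapply Rlt_le_trans; [exact E5| apply Rmin_r]).
    specialize (B1 e De F1). specialize (B2 e De F2). specialize (B3 e De F3).
    specialize (B4 e De F4). specialize (B5 e De F5).
    assert (ne := HD e De). assert (Hae : 0 < Rabs e) by (apply Rabs_pos_lt; auto).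
    assert (KE : K * Rabs e < d).
    { apply (Rmult_lt_compat_l K) in E1; auto. replace (K * (d / K)) with d in E1 by (field; lra). exact E1. }
    assert (Q : forall c g, Rabs g <= (Rabs c + 1) * Rabs e -> Rabs c + 1 <= K -> Rabs g < d).
    { intros c g Hg Hc. eapply Rle_lt_trans; [exact Hg|]. eapply Rle_lt_trans; [|exact KE].
      apply Rmult_le_compat_r; [lra| exact Hc]. }
    assert (P1 := Rabs_pos c1). assert (P2 := Rabs_pos c2). assert (P3 := Rabs_pos c3).
    assert (P4 := Rabs_pos c4). assert (P5 := Rabs_pos c5).
    specialize (Hol (g1 e) (g2 e) (g3 e) (g4 e) (g5 e)
      ltac:(apply (Q c1); auto; unfold K; lra) ltac:(apply (Q c2); auto; unfold K; lra)
      ltac:(apply (Q c3); auto; unfold K; lra) ltac:(apply (Q c4); auto; unfold K; lra)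
      ltac:(apply (Q c5); auto; unfold K; lra)).
    rewrite Rminus_0_r. unfold Rm. unfold Rdiv. rewrite Rabs_mult, Rabs_inv.
    apply (Rmult_lt_reg_r (Rabs e)); auto. rewrite Rmult_assoc, Rinv_l by lra. rewrite Rmult_1_r.
    eapply Rle_lt_trans; [exact Hol|].
    assert (S : Rabs (g1 e) + Rabs (g2 e) + Rabs (g3 e) + Rabs (g4 e) + Rabs (g5 e) <= K * Rabs e) by (unfold K; lra).
    apply Rle_lt_trans with (eps / (2 * K) * (K * Rabs e)).
    { apply Rmult_le_compat_l; lra. }
    replace (eps / (2 * K) * (K * Rabs e)) with (eps / 2 * Rabs e) by (field; lra).
    apply Rmult_lt_compat_r; lra. }

  assert (LS := lim_plus _ _ _ _ _ LR
     (lim_plus _ _ _ _ _ (lim_plus _ _ _ _ _ (lim_plus _ _ _ _ _ (lim_plus _ _ _ _ _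
       (lim_mult _ _ _ _ _ (lim_const Dom (D1 x u v p w)) L1)
       (lim_mult _ _ _ _ _ (lim_const Dom (D2 x u v p w)) L2))
       (lim_mult _ _ _ _ _ (lim_const Dom (D3 x u v p w)) L3))
       (lim_mult _ _ _ _ _ (lim_const Dom (D4 x u v p w)) L4))
       (lim_mult _ _ _ _ _ (lim_const Dom (D5 x u v p w)) L5))).
  rewrite Rplus_0_l in LS. eapply lim_ext; [|exact LS].
  intros e De. assert (ne := HD e De). unfold Rm. field. exact ne.
Qed.


Lemma chain5 f D1 D2 D3 D4 D5 (HP : hasP5 f D1 D2 D3 D4 D5) (g1 g2 g3 g4 g5 : R -> R) d1 d2 d3 d4 d5 t :
  derivable_pt_lim g1 t d1 -> derivable_pt_lim g2 t d2 -> derivable_pt_lim g3 t d3 ->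
  derivable_pt_lim g4 t d4 -> derivable_pt_lim g5 t d5 ->
  cont5_at D1 (g1 t) (g2 t) (g3 t) (g4 t) (g5 t) -> cont5_at D2 (g1 t) (g2 t) (g3 t) (g4 t) (g5 t) ->
  cont5_at D3 (g1 t) (g2 t) (g3 t) (g4 t) (g5 t) -> cont5_at D4 (g1 t) (g2 t) (g3 t) (g4 t) (g5 t) ->
  cont5_at D5 (g1 t) (g2 t) (g3 t) (g4 t) (g5 t) ->
  derivable_pt_lim (fun s => f (g1 s) (g2 s) (g3 s) (g4 s) (g5 s)) t
    (D1 (g1 t) (g2 t) (g3 t) (g4 t) (g5 t) * d1 + D2 (g1 t) (g2 t) (g3 t) (g4 t) (g5 t) * d2 +
     D3 (g1 t) (g2 t) (g3 t) (g4 t) (g5 t) * d3 + D4 (g1 t) (g2 t) (g3 t) (g4 t) (g5 t) * d4 +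
     D5 (g1 t) (g2 t) (g3 t) (g4 t) (g5 t) * d5).
Proof.
  intros H1 H2 H3 H4 H5 C1 C2 C3 C4 C5. apply lim_der.
  assert (L := olim5 f D1 D2 D3 D4 D5 HP _ _ _ _ _ C1 C2 C3 C4 C5 (fun h => h <> 0)
     (fun h => g1 (t + h) - g1 t) (fun h => g2 (t + h) - g2 t) (fun h => g3 (t + h) - g3 t)
     (fun h => g4 (t + h) - g4 t) (fun h => g5 (t + h) - g5 t) d1 d2 d3 d4 d5 (fun e H => H)
     (der_lim _ _ _ H1) (der_lim _ _ _ H2) (der_lim _ _ _ H3) (der_lim _ _ _ H4) (der_lim _ _ _ H5)).
  eapply lim_ext; [|exact L]. intros e _. simpl.
  repeat match goal with |- context [?a + (?b - ?a)] => replace (a + (b - a)) with b by ring end.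
  reflexivity.
Qed.

Lemma cont_comp5 (g : fun5) (g1 g2 g3 g4 g5 : R -> R) t :
  cont5_at g (g1 t) (g2 t) (g3 t) (g4 t) (g5 t) ->
  continuity_pt g1 t -> continuity_pt g2 t -> continuity_pt g3 t -> continuity_pt g4 t -> continuity_pt g5 t ->
  continuity_pt (fun s => g (g1 s) (g2 s) (g3 s) (g4 s) (g5 s)) t.
Proof.
  intros Cg C1 C2 C3 C4 C5. apply cont_intro. intros e He.
  destruct (Cg e He) as [d [Hd Hg]].
  destruct (cont_elim _ _ C1 d Hd) as [a1 [Ha1 B1]].
  destruct (cont_elim _ _ C2 d Hd) as [a2 [Ha2 B2]].
  destruct (cont_elim _ _ C3 d Hd) as [a3 [Ha3 B3]].
  destruct (cont_elim _ _ C4 d Hd) as [a4 [Ha4 B4]].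
  destruct (cont_elim _ _ C5 d Hd) as [a5 [Ha5 B5]].
  exists (Rmin a1 (Rmin a2 (Rmin a3 (Rmin a4 a5)))). split; [repeat apply Rmin_pos; auto|].
  intros y Hy. assert (M1 := Rmin_l a1 (Rmin a2 (Rmin a3 (Rmin a4 a5)))).
  assert (M2 := Rmin_r a1 (Rmin a2 (Rmin a3 (Rmin a4 a5)))).
  assert (M3 := Rmin_l a2 (Rmin a3 (Rmin a4 a5))). assert (M4 := Rmin_r a2 (Rmin a3 (Rmin a4 a5))).
  assert (M5 := Rmin_l a3 (Rmin a4 a5)). assert (M6 := Rmin_r a3 (Rmin a4 a5)).
  assert (M7 := Rmin_l a4 a5). assert (M8 := Rmin_r a4 a5).
  apply Hg; [apply B1|apply B2|apply B3|apply B4|apply B5]; lra.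
Qed.

Definition hasP3 (f D1 D2 D3 : fun3) := forall x u v,
  derivable_pt_lim (fun t => f t u v) x (D1 x u v) /\
  derivable_pt_lim (fun t => f x t v) u (D2 x u v) /\
  derivable_pt_lim (fun t => f x u t) v (D3 x u v).

Definition cont3_at (g : fun3) x u v := forall eps, 0 < eps -> exists d, 0 < d /\
    forall x' u' v', Rabs (x' - x) < d -> Rabs (u' - u) < d -> Rabs (v' - v) < d ->
      Rabs (g x' u' v' - g x u v) < eps.

Definition lift3 (f : fun3) : fun5 := fun x u v _ _ => f x u v.
Definition zero5 : fun5 := fun _ _ _ _ _ => 0.

Lemma hasP_lift f D1 D2 D3 : hasP3 f D1 D2 D3 -> hasP5 (lift3 f) (lift3 D1) (lift3 D2) (lift3 D3) zero5 zero5.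
Proof.
  intros H x u v p w. destruct (H x u v) as [A [B C]]. unfold lift3, zero5.
  repeat split; auto; apply dconst.
Qed.

Lemma cont_lift g x u v p w : cont3_at g x u v -> cont5_at (lift3 g) x u v p w.
Proof.
  intros H e He. destruct (H e He) as [d [Hd H']]. exists d; split; auto.
  intros. unfold lift3. auto.
Qed.

Lemma cont_zero x u v p w : cont5_at zero5 x u v p w.
Proof. intros e He. exists 1; split; [lra|]. intros. unfold zero5. rewrite Rabs_z. auto. Qed.

Lemma chain3 f D1 D2 D3 (HP : hasP3 f D1 D2 D3) (g1 g2 g3 : R -> R) d1 d2 d3 t :
  derivable_pt_lim g1 t d1 -> derivable_pt_lim g2 t d2 -> derivable_pt_lim g3 t d3 ->
  cont3_at D1 (g1 t) (g2 t) (g3 t) -> cont3_at D2 (g1 t) (g2 t) (g3 t) -> cont3_at D3 (g1 t) (g2 t) (g3 t) ->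
  derivable_pt_lim (fun s => f (g1 s) (g2 s) (g3 s)) t
    (D1 (g1 t) (g2 t) (g3 t) * d1 + D2 (g1 t) (g2 t) (g3 t) * d2 + D3 (g1 t) (g2 t) (g3 t) * d3).
Proof.
  intros H1 H2 H3 C1 C2 C3.
  assert (K := chain5 _ _ _ _ _ _ (hasP_lift _ _ _ _ HP) g1 g2 g3 (fun _ => 0) (fun _ => 0) d1 d2 d3 0 0 t
    H1 H2 H3 (dconst 0 t) (dconst 0 t) (cont_lift _ _ _ _ _ _ C1) (cont_lift _ _ _ _ _ _ C2)
    (cont_lift _ _ _ _ _ _ C3) (cont_zero _ _ _ _ _) (cont_zero _ _ _ _ _)).
  unfold lift3, zero5 in K. eapply dval; [exact K| ring].
Qed.

Lemma cont_comp3 (g : fun3) (g1 g2 g3 : R -> R) t :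
  cont3_at g (g1 t) (g2 t) (g3 t) ->
  continuity_pt g1 t -> continuity_pt g2 t -> continuity_pt g3 t ->
  continuity_pt (fun s => g (g1 s) (g2 s) (g3 s)) t.
Proof.
  intros Cg C1 C2 C3.
  exact (cont_comp5 (lift3 g) g1 g2 g3 (fun _ => 0) (fun _ => 0) t (cont_lift _ _ _ _ 0 0 Cg) C1 C2 C3 (cconst 0 t) (cconst 0 t)).
Qed.

Lemma C15_hasP f : C1_5 f -> hasP5 f (partial5 f 1) (partial5 f 2) (partial5 f 3) (partial5 f 4) (partial5 f 5).
Proof.
  intros [_ H] x u v p w.
  repeat split.
  - destruct (H 1%nat ltac:(lia)) as [D _]. exact (deriv_spec _ _ (D x u v p w)).
  - destruct (H 2%nat ltac:(lia)) as [D _]. exact (deriv_spec _ _ (D x u v p w)).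
  - destruct (H 3%nat ltac:(lia)) as [D _]. exact (deriv_spec _ _ (D x u v p w)).
  - destruct (H 4%nat ltac:(lia)) as [D _]. exact (deriv_spec _ _ (D x u v p w)).
  - destruct (H 5%nat ltac:(lia)) as [D _]. exact (deriv_spec _ _ (D x u v p w)).
Qed.

Lemma C15_cont f i : C1_5 f -> (1 <= i <= 5)%nat -> forall x u v p w, cont5_at (partial5 f i) x u v p w.
Proof. intros [_ H] Hi x u v p w. destruct (H i Hi) as [_ C]. exact (C x u v p w). Qed.

Lemma C15_cont0 f : C1_5 f -> forall x u v p w, cont5_at f x u v p w.
Proof. intros [C _] x u v p w. exact (C x u v p w). Qed.

Lemma C13_hasP f : C1_3 f -> hasP3 f (partial3 f 1) (partial3 f 2) (partial3 f 3).
Proof.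
  intros [_ H] x u v.
  repeat split.
  - destruct (H 1%nat ltac:(lia)) as [D _]. exact (deriv_spec _ _ (D x u v)).
  - destruct (H 2%nat ltac:(lia)) as [D _]. exact (deriv_spec _ _ (D x u v)).
  - destruct (H 3%nat ltac:(lia)) as [D _]. exact (deriv_spec _ _ (D x u v)).
Qed.

Lemma C13_cont f i : C1_3 f -> (1 <= i <= 3)%nat -> forall x u v, cont3_at (partial3 f i) x u v.
Proof. intros [_ H] Hi x u v. destruct (H i Hi) as [_ C]. exact (C x u v). Qed.


Lemma q_der q x : C2_fun q -> derivable_pt_lim q x (deriv q x).
Proof. intros [H _]. apply deriv_spec, H. Qed.
Lemma dq_der q x : C2_fun q -> derivable_pt_lim (deriv q) x (deriv (deriv q) x).
Proof. intros [_ [H _]]. apply deriv_spec, H. Qed.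
Lemma q_cont q x : C2_fun q -> continuity_pt q x.
Proof. intros H. eapply der_cont, q_der, H. Qed.
Lemma dq_cont q x : C2_fun q -> continuity_pt (deriv q) x.
Proof. intros H. eapply der_cont, dq_der, H. Qed.

Definition Tf (g : fun3) (q Q : R -> R) x := g x (q x) (Q x).
Definition Tpf (g : fun3) (q Q : R -> R) x := partial3 g 1 x (q x) (Q x) + partial3 g 2 x (q x) (Q x) * deriv q x
  + partial3 g 3 x (q x) (Q x) * deriv Q x.

Lemma Tf_der g q Q x : C1_3 g -> C2_fun q -> C2_fun Q -> derivable_pt_lim (Tf g q Q) x (Tpf g q Q x).
Proof.
  intros Hg Hq HQ. unfold Tf, Tpf.
  eapply dval.
  - apply (chain3 g _ _ _ (C13_hasP g Hg) (fun s => s) q Q 1 (deriv q x) (deriv Q x) x (did x) (q_der q x Hq) (q_der Q x HQ));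
    apply C13_cont; auto; lia.
  - simpl. ring.
Qed.

Lemma Tf_cont g q Q x : C1_3 g -> C2_fun q -> C2_fun Q -> continuity_pt (Tf g q Q) x.
Proof. intros; eapply der_cont, Tf_der; eauto. Qed.

Lemma Tpf_cont g q Q x : C1_3 g -> C2_fun q -> C2_fun Q -> continuity_pt (Tpf g q Q) x.
Proof.
  intros Hg Hq HQ. unfold Tpf.
  assert (K : forall i, (1 <= i <= 3)%nat -> continuity_pt (fun s => partial3 g i s (q s) (Q s)) x).
  { intros i Hi. apply (cont_comp3 (partial3 g i) (fun s => s) q Q x); [apply C13_cont; auto|apply cid|apply q_cont; auto|apply q_cont; auto]. }
  apply cplus; [apply cplus|]; [apply K; lia| apply cmult; [apply K; lia| apply dq_cont; auto]| apply cmult; [apply K; lia| apply dq_cont; auto]].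
Qed.

Lemma along_cont (g : fun5) q Q x : (forall x u v p w, cont5_at g x u v p w) -> C2_fun q -> C2_fun Q -> continuity_pt (along g q Q) x.
Proof.
  intros Hg Hq HQ. unfold along.
  apply (cont_comp5 g (fun s => s) q Q (deriv q) (deriv Q) x); auto; [apply cid|apply q_cont|apply q_cont|apply dq_cont|apply dq_cont]; auto.
Qed.

Definition dalong (L : fun5) (q Q : R -> R) x :=
  along (partial5 L 1) q Q x + along (partial5 L 2) q Q x * deriv q x + along (partial5 L 3) q Q x * deriv Q x
  + along (partial5 L 4) q Q x * deriv (deriv q) x + along (partial5 L 5) q Q x * deriv (deriv Q) x.

Lemma along_der L q Q x : C1_5 L -> C2_fun q -> C2_fun Q -> derivable_pt_lim (along L q Q) x (dalong L q Q x).
Proof.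
  intros HL Hq HQ. unfold along at 1, dalong.
  eapply dval.
  - apply (chain5 L _ _ _ _ _ (C15_hasP L HL) (fun s => s) q Q (deriv q) (deriv Q) 1 (deriv q x) (deriv Q x)
     (deriv (deriv q) x) (deriv (deriv Q) x) x (did x) (q_der q x Hq) (q_der Q x HQ) (dq_der q x Hq) (dq_der Q x HQ));
    apply C15_cont; auto; lia.
  - unfold along. ring.
Qed.

Definition Ef (L : fun5) (tau zl zu : fun3) (q Q : R -> R) x :=
  along (partial5 L 1) q Q x * Tf tau q Q x + along (partial5 L 2) q Q x * Tf zl q Q x
  + along (partial5 L 3) q Q x * Tf zu q Q x
  + along (partial5 L 4) q Q x * (Tpf zl q Q x - deriv q x * Tpf tau q Q x)
  + along (partial5 L 5) q Q x * (Tpf zu q Q x - deriv Q x * Tpf tau q Q x)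
  + along L q Q x * Tpf tau q Q x.

Local Opaque Tpf Tf.
Lemma Ef_cont L tau zl zu q Q x : C1_5 L -> C1_3 tau -> C1_3 zl -> C1_3 zu -> C2_fun q -> C2_fun Q ->
  continuity_pt (Ef L tau zl zu q Q) x.
Proof.
  intros HL Ht Hzl Hzu Hq HQ. unfold Ef.
  assert (K : forall i, (1 <= i <= 5)%nat -> continuity_pt (along (partial5 L i) q Q) x).
  { intros i Hi. apply along_cont; auto. apply C15_cont; auto. }
  repeat first [apply cminus | apply cplus | apply cmult];
  first [apply K; lia | apply Tf_cont; auto | apply Tpf_cont; auto | apply dq_cont; auto | apply along_cont; auto; apply C15_cont0; auto].
Qed.

Local Transparent Tpf Tf.
Lemma noether_der L tau zl zu q Q x : C1_5 L -> C1_3 tau -> C1_3 zl -> C1_3 zu -> C2_fun q -> C2_fun Q ->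
  derivable_pt_lim (along (partial5 L 4) q Q) x (along (partial5 L 2) q Q x) ->
  derivable_pt_lim (along (partial5 L 5) q Q) x (along (partial5 L 3) q Q x) ->
  derivable_pt_lim (noether_C L tau zl zu q Q) x (Ef L tau zl zu q Q x).
Proof.
  intros HL Ht Hzl Hzu Hq HQ E4 E5. unfold noether_C.
  eapply dval.
  - apply dplus; [apply dplus|]; [apply dmult | apply dmult | apply dmult].
    + exact E4.
    + apply (Tf_der zl q Q x Hzl Hq HQ).
    + exact E5.
    + apply (Tf_der zu q Q x Hzu Hq HQ).
    + apply dminus; [apply dminus|]; [apply (along_der L q Q x HL Hq HQ)| apply dmult | apply dmult].
      * exact E4.
      * apply dq_der; auto.
      * exact E5.
      * apply dq_der; auto.
    + apply (Tf_der tau q Q x Ht Hq HQ).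
  - unfold Ef, dalong, Tf. ring.
Qed.

From Coquelicot Require Import Coquelicot.

Lemma rint_bound0 (F : R -> R) c d K M : c <= d -> ex_RInt F c d ->
  (forall y, c <= y <= d -> Rabs (F y - K) <= M) -> Rabs (RInt F c d - K * (d - c)) <= M * Rabs (d - c).
Proof.
  intros Hcd Hex Hb.
  assert (E : RInt F c d - K * (d - c) = RInt (fun y => F y - K) c d).
  { assert (E1 := RInt_minus F (fun _ => K) c d Hex (ex_RInt_const c d K)).
    rewrite RInt_const in E1. change (RInt (fun x => F x - K) c d = RInt F c d - (d - c) * K) in E1.
    rewrite E1. ring. }
  rewrite E. rewrite (Rabs_right (d - c)) by lra.
  rewrite Rmult_comm. apply abs_RInt_le_const; auto.
  apply (ex_RInt_minus F (fun _ => K)); auto. apply ex_RInt_const.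
Qed.

Lemma rint_bound (F : R -> R) c d K M : ex_RInt F c d ->
  (forall y, Rmin c d <= y <= Rmax c d -> Rabs (F y - K) <= M) -> Rabs (RInt F c d - K * (d - c)) <= M * Rabs (d - c).
Proof.
  intros Hex Hb. destruct (Rle_dec c d) as [Hcd|Hcd].
  - apply rint_bound0; auto. intros y Hy. apply Hb. rewrite Rmin_left, Rmax_right; lra.
  - assert (Hdc : d <= c) by lra.
    assert (E : RInt F c d = - RInt F d c).
    { rewrite <- (opp_RInt_swap F d c) by (apply ex_RInt_swap; auto). reflexivity. }
    rewrite E. replace (- RInt F d c - K * (d - c)) with (- (RInt F d c - K * (c - d))) by ring.
    rewrite Rabs_Ropp. replace (Rabs (d - c)) with (Rabs (c - d)) by (rewrite <- Rabs_Ropp; f_equal; ring).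
    apply rint_bound0; auto. apply ex_RInt_swap; auto.
    intros y Hy. apply Hb. rewrite Rmin_right, Rmax_left; lra.
Qed.

Lemma between_prod c d y : Rmin c d <= y <= Rmax c d -> (c - y) * (d - y) <= 0.
Proof.
  intros H. unfold Rmin, Rmax in H. destruct (Rle_dec c d); nra.
Qed.

Lemma zero_lemma z K : (forall e, 0 < e < 1 -> Rabs z <= e * K) -> z = 0.
Proof.
  intros H. destruct (Req_dec z 0) as [|Hz]; auto. exfalso.
  assert (Pz : 0 < Rabs z) by (apply Rabs_pos_lt; auto).
  assert (HK : 0 < K). { specialize (H (1/2) ltac:(lra)). lra. }
  set (e := Rmin (1/2) (Rabs z / (2 * K))).
  assert (He : 0 < e) by (unfold e; apply Rmin_pos; [lra| apply Rdiv_lt_0_compat; lra]).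
  assert (He1 : e <= 1/2) by apply Rmin_l.
  assert (He2 : e <= Rabs z / (2 * K)) by apply Rmin_r.
  specialize (H e ltac:(lra)).
  assert (e * K <= Rabs z / 2).
  { apply Rle_trans with (Rabs z / (2 * K) * K). apply Rmult_le_compat_r; lra. right; field; lra. }
  lra.
Qed.

Lemma pointwise (b x0 l : R) (f g Xt h : R -> R) :
  x0 < b -> continuity_pt f x0 -> continuity_pt h x0 -> continuity Xt -> derivable_pt_lim Xt x0 l ->
  (forall s, x0 <= s < b -> g (Xt s) = h s) ->
  (forall t, x0 < t < b -> exists (p1 : Riemann_integrable f x0 t) (p2 : Riemann_integrable g (Xt x0) (Xt t)),
        RiemannInt p1 = RiemannInt p2) ->
  f x0 = h x0 * l.
Proof.
  intros Hb Cf Ch CX DX Hgh Hint.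
  apply Rminus_diag_uniq. apply (zero_lemma _ (2 + Rabs (h x0) + Rabs l)).
  intros e He.
  destruct (cont_elim _ _ Cf e ltac:(lra)) as [df [Hdf Bf]].
  destruct (cont_elim _ _ Ch e ltac:(lra)) as [dh [Hdh Bh]].
  destruct (DX e ltac:(lra)) as [dX BX].
  assert (HdX := cond_pos dX).
  set (k := Rmin (Rmin df dh) (Rmin dX (b - x0)) / 2).
  assert (Hk : 0 < k) by (unfold k; apply Rdiv_lt_0_compat; [repeat apply Rmin_pos; lra| lra]).
  assert (M1 := Rmin_l (Rmin df dh) (Rmin dX (b - x0))). assert (M2 := Rmin_r (Rmin df dh) (Rmin dX (b - x0))).
  assert (M3 := Rmin_l df dh). assert (M4 := Rmin_r df dh). assert (M5 := Rmin_l dX (b - x0)).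
  assert (M6 := Rmin_r dX (b - x0)).
  assert (Kf : k < df) by (unfold k; lra). assert (Kh : k < dh) by (unfold k; lra).
  assert (KX : k < dX) by (unfold k; lra). assert (Kb : k < b - x0) by (unfold k; lra).
  set (t := x0 + k).
  destruct (Hint t ltac:(unfold t; lra)) as [p1 [p2 Heq]].
  rewrite <- (RInt_Reals f) in Heq. rewrite <- (RInt_Reals g) in Heq.
  assert (Ef := ex_RInt_Reals_1 _ _ _ p1). assert (Eg := ex_RInt_Reals_1 _ _ _ p2).
  assert (B1 : Rabs (RInt f x0 t - f x0 * (t - x0)) <= e * Rabs (t - x0)).
  { apply rint_bound; auto. intros y Hy. rewrite Rmin_left, Rmax_right in Hy by (unfold t; lra).
    left. apply Bf. rewrite Rabs_right by lra. unfold t in Hy; lra. }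
  assert (B2 : Rabs (RInt g (Xt x0) (Xt t) - h x0 * (Xt t - Xt x0)) <= e * Rabs (Xt t - Xt x0)).
  { apply rint_bound; auto. intros y Hy.
    assert (Hc : continuity (fun s => Xt s - y)) by (intro s; apply cminus; [apply CX| apply cconst]).
    destruct (IVT_cor (fun s => Xt s - y) x0 t Hc ltac:(unfold t; lra) (between_prod _ _ _ Hy)) as [s [Hs Es]].
    replace y with (Xt s) by lra. rewrite Hgh by (unfold t in Hs; lra).
    left. apply Bh. rewrite Rabs_right by lra. unfold t in Hs; lra. }
  assert (B3 : Rabs (Xt t - Xt x0 - l * k) <= e * k).
  { assert (Hkn : k <> 0) by lra.
    specialize (BX k Hkn ltac:(rewrite Rabs_right; lra)). fold t in BX.
    replace (Xt t - Xt x0 - l * k) with (((Xt t - Xt x0) / k - l) * k) by (field; lra).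
    rewrite Rabs_mult, (Rabs_right k) by lra. apply Rmult_le_compat_r; lra. }
  replace (t - x0) with k in B1 by (unfold t; ring). rewrite (Rabs_right k) in B1 by lra.
  assert (HD : Rabs (Xt t - Xt x0) <= (Rabs l + 1) * k).
  { replace (Xt t - Xt x0) with ((Xt t - Xt x0 - l * k) + l * k) by ring.
    eapply Rle_trans; [apply Rabs_triang|]. rewrite Rabs_mult, (Rabs_right k) by lra. nra. }
  assert (Z : (f x0 - h x0 * l) * k = - (RInt f x0 t - f x0 * k) + (RInt g (Xt x0) (Xt t) - h x0 * (Xt t - Xt x0))
        + h x0 * (Xt t - Xt x0 - l * k)) by (rewrite Heq; ring).
  assert (A : Rabs ((f x0 - h x0 * l) * k) <= e * k + e * ((Rabs l + 1) * k) + Rabs (h x0) * (e * k)).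
  { rewrite Z. eapply Rle_trans; [apply Rabs_triang|]. apply Rplus_le_compat.
    - eapply Rle_trans; [apply Rabs_triang|]. rewrite Rabs_Ropp. apply Rplus_le_compat; auto.
      eapply Rle_trans; [exact B2|]. apply Rmult_le_compat_l; lra.
    - rewrite Rabs_mult. apply Rmult_le_compat_l; auto. apply Rabs_pos. }
  rewrite Rabs_mult, (Rabs_right k) in A by lra.
  apply (Rmult_le_reg_r k); auto. eapply Rle_trans; [exact A|].
  assert (0 <= Rabs l) by apply Rabs_pos. assert (0 <= Rabs (h x0)) by apply Rabs_pos.
  right. ring.
Qed.


Lemma cabs f x : continuity_pt f x -> continuity_pt (fun y => Rabs (f y)) x.
Proof.
  intros H. apply cont_intro. intros e He. destruct (cont_elim _ _ H e He) as [d [Hd H']].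
  exists d; split; auto. intros y Hy. eapply Rle_lt_trans; [apply Rabs_triang_inv2|]. auto.
Qed.

Lemma deriv_through (Qf Xt A : R -> R) Xp Ap a b s : a < s < b ->
  (forall y, a < y < b -> Qf (Xt y) = A y) -> differentiable_at Qf (Xt s) ->
  derivable_pt_lim Xt s Xp -> derivable_pt_lim A s Ap -> Xp <> 0 -> deriv Qf (Xt s) = Ap / Xp.
Proof.
  intros Hs E HQ DX DA HX.
  assert (D1 := derivable_pt_lim_comp Xt Qf s Xp (deriv Qf (Xt s)) DX (deriv_spec _ _ HQ)).
  assert (D2 : derivable_pt_lim (comp Qf Xt) s Ap).
  { apply (der_ext_local A (comp Qf Xt) s Ap (Rmin (s - a) (b - s))).
    - apply Rmin_pos; lra.
    - intros y Hy. unfold comp. symmetry. apply E.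
      assert (M1 := Rmin_l (s - a) (b - s)). assert (M2 := Rmin_r (s - a) (b - s)).
      apply Rabs_def2 in Hy. lra.
    - exact DA. }
  assert (U := uniqueness_limite _ _ _ _ D1 D2). rewrite <- U. field; auto.
Qed.

Lemma lim_rho a b rho x0 e0 : small_rem a b rho -> a <= x0 <= b ->
  limit1_in (fun e => rho e x0 / e) (fun e => 0 < e < e0) 0 0.
Proof.
  intros H Hx. apply lim_intro. intros eps Heps.
  destruct (H (eps / 2) ltac:(lra)) as [d [Hd Hr]]. exists d; split; auto.
  intros e De He. rewrite Rabs_right in He by lra. specialize (Hr e ltac:(lra) x0 Hx).
  rewrite Rminus_0_r. unfold Rdiv. rewrite Rabs_mult, Rabs_inv, (Rabs_right e) by lra.
  apply (Rmult_lt_reg_r e); [lra|]. rewrite Rmult_assoc, Rinv_l, Rmult_1_r by lra. nra.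
Qed.

Lemma abs_le t c : Rabs t <= c -> - c <= t <= c.
Proof. intros H. assert (H1 := Rle_abs t). assert (H2 := Rle_abs (- t)). rewrite Rabs_Ropp in H2. lra. Qed.

Section Main.
Variables (a b : R) (L : fun5) (tau zl zu : fun3) (q Q : R -> R)
  (X Ql Qu rho0 rho1 rho2 drho0 drho1 drho2 : R -> R -> R).
Hypotheses (Hab : a < b) (HL : C1_5 L) (Ht : C1_3 tau) (Hzl : C1_3 zl) (Hzu : C1_3 zu)
  (Hq : C2_fun q) (HQ : C2_fun Q)
  (R0 : rem_ok a b rho0 drho0) (R1 : rem_ok a b rho1 drho1) (R2 : rem_ok a b rho2 drho2)
  (Hspec : forall eps x, 0 < eps -> a <= x <= b ->
       X eps x = x + eps * tau x (q x) (Q x) + rho0 eps x /\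
       Ql eps (X eps x) = q x + eps * zl x (q x) (Q x) + rho1 eps x /\
       Qu eps (X eps x) = Q x + eps * zu x (q x) (Q x) + rho2 eps x /\
       differentiable_at (Ql eps) (X eps x) /\
       differentiable_at (Qu eps) (X eps x))
  (Hinv : forall eps ta tb, 0 < eps -> a <= ta -> ta <= tb -> tb <= b ->
       integral_eq (along L q Q) ta tb (along L (Ql eps) (Qu eps)) (X eps ta) (X eps tb)).

Definition Xt eps y := y + eps * Tf tau q Q y + rho0 eps y.
Definition Xtp eps y := 1 + eps * Tpf tau q Q y + drho0 eps y.
Definition A1 eps y := q y + eps * Tf zl q Q y + rho1 eps y.
Definition A1p eps y := deriv q y + eps * Tpf zl q Q y + drho1 eps y.
Definition A2 eps y := Q y + eps * Tf zu q Q y + rho2 eps y.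
Definition A2p eps y := deriv Q y + eps * Tpf zu q Q y + drho2 eps y.

Lemma der_gen (T Tp : R -> R) (rho drho : R -> R -> R) eps y : 0 < eps ->
  derivable_pt_lim T y (Tp y) -> rem_ok a b rho drho ->
  derivable_pt_lim (fun z => z + eps * T z + rho eps z) y (1 + eps * Tp y + drho eps y).
Proof.
  intros He DT [Dr _]. eapply dval.
  - apply dplus; [apply dplus|]; [apply did| apply dmult; [apply dconst| exact DT] | apply Dr; auto].
  - cbv beta; ring.
Qed.

Lemma der_gen2 (f T Tp : R -> R) (rho drho : R -> R -> R) eps y : 0 < eps ->
  derivable_pt_lim f y (deriv f y) ->
  derivable_pt_lim T y (Tp y) -> rem_ok a b rho drho ->
  derivable_pt_lim (fun z => f z + eps * T z + rho eps z) y (deriv f y + eps * Tp y + drho eps y).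
Proof.
  intros He Df DT [Dr _]. eapply dval.
  - apply dplus; [apply dplus|]; [exact Df| apply dmult; [apply dconst| exact DT] | apply Dr; auto].
  - cbv beta; ring.
Qed.

Lemma Xt_der eps y : 0 < eps -> derivable_pt_lim (Xt eps) y (Xtp eps y).
Proof. intros He. apply der_gen; auto. apply Tf_der; auto. Qed.
Lemma A1_der eps y : 0 < eps -> derivable_pt_lim (A1 eps) y (A1p eps y).
Proof. intros He. apply der_gen2; auto. apply q_der; auto. apply Tf_der; auto. Qed.
Lemma A2_der eps y : 0 < eps -> derivable_pt_lim (A2 eps) y (A2p eps y).
Proof. intros He. apply der_gen2; auto. apply q_der; auto. apply Tf_der; auto. Qed.

Lemma cont_gen (f Tp : R -> R) (drho : R -> R -> R) eps y : 0 < eps -> continuity_pt f y -> continuity_pt Tp y ->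
  (forall eps, 0 < eps -> continuity (drho eps)) ->
  continuity_pt (fun z => f z + eps * Tp z + drho eps z) y.
Proof.
  intros He Cf CT Cd. apply cplus; [apply cplus|]; auto. apply cmult; auto. apply cconst. apply Cd; auto.
Qed.

Lemma Tpf_bound : exists M, 0 <= M /\ forall c, a <= c <= b -> Rabs (Tpf tau q Q c) <= M.
Proof.
  destruct (continuity_ab_maj (fun x => Rabs (Tpf tau q Q x)) a b ltac:(lra)) as [Mx [HM _]].
  - intros c _. apply cabs, Tpf_cont; auto.
  - exists (Rabs (Tpf tau q Q Mx)). split; [apply Rabs_pos| exact HM].
Qed.

Lemma e0_exists : exists e0, 0 < e0 /\ forall eps x, 0 < eps < e0 -> a <= x <= b ->
   Rabs (eps * Tpf tau q Q x + drho0 eps x) <= 1/2.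
Proof.
  destruct Tpf_bound as [M [HM0 HM]].
  destruct R0 as [_ [_ [_ Sd]]].
  destruct (Sd (1/4) ltac:(lra)) as [d0 [Hd0 Bd]].
  assert (HM1 : 0 < 1 / (4 * (M + 1))) by (apply Rdiv_lt_0_compat; lra).
  exists (Rmin d0 (Rmin (1/4) (1 / (4 * (M + 1))))). split.
  { repeat apply Rmin_pos; lra. }
  intros eps x He Hx.
  assert (M1 := Rmin_l d0 (Rmin (1/4) (1 / (4 * (M + 1))))).
  assert (M2 := Rmin_r d0 (Rmin (1/4) (1 / (4 * (M + 1))))).
  assert (M3 := Rmin_l (1/4) (1 / (4 * (M + 1)))). assert (M4 := Rmin_r (1/4) (1 / (4 * (M + 1)))).
  specialize (Bd eps ltac:(lra) x Hx). specialize (HM x Hx).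
  eapply Rle_trans; [apply Rabs_triang|]. rewrite Rabs_mult, (Rabs_right eps) by lra.
  assert (eps * Rabs (Tpf tau q Q x) <= 1/4).
  { apply Rle_trans with (1 / (4 * (M + 1)) * (M + 1)).
    - apply Rmult_le_compat; try lra. apply Rabs_pos.
    - right; field; lra. }
  lra.
Qed.

Lemma pointwise_eps eps x0 : 0 < eps -> a < x0 < b ->
  (forall x, a <= x <= b -> Xtp eps x <> 0) ->
  along L q Q x0 = L (Xt eps x0) (A1 eps x0) (A2 eps x0) (A1p eps x0 / Xtp eps x0) (A2p eps x0 / Xtp eps x0) * Xtp eps x0.
Proof.
  intros He Hx0 HXp.
  assert (EX : forall y, a <= y <= b -> X eps y = Xt eps y).
  { intros y Hy. destruct (Hspec eps y He Hy) as [E _]. rewrite E. reflexivity. }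
  assert (E1 : forall y, a < y < b -> Ql eps (Xt eps y) = A1 eps y).
  { intros y Hy. destruct (Hspec eps y He ltac:(lra)) as [E [E' _]]. rewrite <- EX by lra. rewrite E'. reflexivity. }
  assert (E2 : forall y, a < y < b -> Qu eps (Xt eps y) = A2 eps y).
  { intros y Hy. destruct (Hspec eps y He ltac:(lra)) as [E [_ [E' _]]]. rewrite <- EX by lra. rewrite E'. reflexivity. }
  apply (pointwise b x0 (Xtp eps x0) (along L q Q) (along L (Ql eps) (Qu eps)) (Xt eps)
     (fun y => L (Xt eps y) (A1 eps y) (A2 eps y) (A1p eps y / Xtp eps y) (A2p eps y / Xtp eps y))).
  - lra.
  - apply along_cont; auto. apply C15_cont0; auto.
  - apply (cont_comp5 L (Xt eps) (A1 eps) (A2 eps) (fun y => A1p eps y / Xtp eps y) (fun y => A2p eps y / Xtp eps y) x0).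
    + apply C15_cont0; auto.
    + eapply der_cont, Xt_der; auto.
    + eapply der_cont, A1_der; auto.
    + eapply der_cont, A2_der; auto.
    + apply cdiv; [unfold A1p| unfold Xtp|apply HXp; lra]; apply cont_gen; auto; try (apply dq_cont; auto); try (apply Tpf_cont; auto);
      first [apply (proj1 (proj2 R0)) | apply (proj1 (proj2 R1)) | apply (proj1 (proj2 R2)) | apply cconst].
    + apply cdiv; [unfold A2p| unfold Xtp|apply HXp; lra]; apply cont_gen; auto; try (apply dq_cont; auto); try (apply Tpf_cont; auto);
      first [apply (proj1 (proj2 R0)) | apply (proj1 (proj2 R1)) | apply (proj1 (proj2 R2)) | apply cconst].
  - intro y. eapply der_cont, Xt_der; auto.
  - apply Xt_der; auto.
  - intros s Hs. unfold along. rewrite E1, E2 by lra.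
    destruct (Hspec eps s He ltac:(lra)) as [_ [_ [_ [D1 D2]]]]. rewrite EX in D1, D2 by lra.
    rewrite (deriv_through (Ql eps) (Xt eps) (A1 eps) (Xtp eps s) (A1p eps s) a b s); auto; try lra.
    rewrite (deriv_through (Qu eps) (Xt eps) (A2 eps) (Xtp eps s) (A2p eps s) a b s); auto; try lra.
    1-6: first [reflexivity | apply Xt_der; auto | apply A1_der; auto | apply A2_der; auto | apply HXp; lra].
  - intros t Ht0. destruct (Hinv eps x0 t He ltac:(lra) ltac:(lra) ltac:(lra)) as [p1 [p2 Heq]].
    revert p2 Heq. rewrite !EX by lra. intros p2 Heq. exists p1, p2. exact Heq.
Qed.


Lemma Ef_zero x0 : a < x0 < b -> Ef L tau zl zu q Q x0 = 0.
Proof.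
  intros Hx0.
  destruct e0_exists as [e0 [He0 Be0]].
  set (Dom := fun e => 0 < e < e0).
  assert (HD : forall e, Dom e -> e <> 0) by (unfold Dom; intros; lra).
  assert (Xp_pos : forall e x, Dom e -> a <= x <= b -> 1/2 <= Xtp e x).
  { intros e x De Hx. specialize (Be0 e x De Hx). unfold Xtp. apply abs_le in Be0. lra. }
  set (T0 := Tf tau q Q x0). set (Z1 := Tf zl q Q x0). set (Z2 := Tf zu q Q x0).
  set (Tp0 := Tpf tau q Q x0). set (Zp1 := Tpf zl q Q x0). set (Zp2 := Tpf zu q Q x0).
  set (q0 := q x0). set (Q0 := Q x0). set (dq0 := deriv q x0). set (dQ0 := deriv Q x0).
  set (g1 := fun e => e * T0 + rho0 e x0).
  set (g2 := fun e => e * Z1 + rho1 e x0).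
  set (g3 := fun e => e * Z2 + rho2 e x0).
  set (Xp := fun e => 1 + e * Tp0 + drho0 e x0).
  set (g4 := fun e => (dq0 + e * Zp1 + drho1 e x0) / Xp e - dq0).
  set (g5 := fun e => (dQ0 + e * Zp2 + drho2 e x0) / Xp e - dQ0).
  assert (Hx0' : a <= x0 <= b) by lra.
  assert (Lr0 := lim_rho a b rho0 x0 e0 (proj1 (proj2 (proj2 R0))) Hx0').
  assert (Lr1 := lim_rho a b rho1 x0 e0 (proj1 (proj2 (proj2 R1))) Hx0').
  assert (Lr2 := lim_rho a b rho2 x0 e0 (proj1 (proj2 (proj2 R2))) Hx0').
  assert (Ld0 := lim_rho a b drho0 x0 e0 (proj2 (proj2 (proj2 R0))) Hx0').
  assert (Ld1 := lim_rho a b drho1 x0 e0 (proj2 (proj2 (proj2 R1))) Hx0').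
  assert (Ld2 := lim_rho a b drho2 x0 e0 (proj2 (proj2 (proj2 R2))) Hx0').
  fold Dom in Lr0, Lr1, Lr2, Ld0, Ld1, Ld2.
  assert (XpD : forall e, Dom e -> Xp e <> 0).
  { intros e De. assert (H := Xp_pos e x0 De Hx0'). unfold Xtp in H. unfold Xp. fold Tp0 in H. lra. }
  assert (LXp : limit1_in Xp Dom 1 0).
  { assert (K := lim_plus _ _ _ _ _ (lim_plus _ _ _ _ _ (lim_const Dom 1) (lim_mult _ _ _ _ _ (lim_id Dom) (lim_const Dom Tp0)))
       (lim_mult _ _ _ _ _ Ld0 (lim_id Dom))).
    replace 1 with (1 + 0 * Tp0 + 0 * 0) by ring. eapply lim_ext; [|exact K].
    intros e De. unfold Xp. cbv beta. field; apply HD; auto. }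
  assert (LiXp : limit1_in (fun e => / Xp e) Dom 1 0).
  { replace 1 with (/ 1) by apply Rinv_1. apply lim_inv; auto; lra. }
  assert (L1 : limit1_in (fun e => g1 e / e) Dom T0 0).
  { replace T0 with (T0 + 0) by ring. eapply lim_ext; [|exact (lim_plus _ _ _ _ _ (lim_const Dom T0) Lr0)].
    intros e De. unfold g1. field; apply HD; auto. }
  assert (L2 : limit1_in (fun e => g2 e / e) Dom Z1 0).
  { replace Z1 with (Z1 + 0) by ring. eapply lim_ext; [|exact (lim_plus _ _ _ _ _ (lim_const Dom Z1) Lr1)].
    intros e De. unfold g2. field; apply HD; auto. }
  assert (L3 : limit1_in (fun e => g3 e / e) Dom Z2 0).
  { replace Z2 with (Z2 + 0) by ring. eapply lim_ext; [|exact (lim_plus _ _ _ _ _ (lim_const Dom Z2) Lr2)].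
    intros e De. unfold g3. field; apply HD; auto. }
  assert (L4 : limit1_in (fun e => g4 e / e) Dom (Zp1 - dq0 * Tp0) 0).
  { assert (K := lim_mult _ _ _ _ _ (lim_minus _ _ _ _ _ (lim_plus _ _ _ _ _ (lim_const Dom Zp1) Ld1)
        (lim_mult _ _ _ _ _ (lim_const Dom dq0) (lim_plus _ _ _ _ _ (lim_const Dom Tp0) Ld0))) LiXp).
    replace (Zp1 - dq0 * Tp0) with ((Zp1 + 0 - dq0 * (Tp0 + 0)) * 1) by ring.
    eapply lim_ext; [|exact K]. intros e De. unfold g4. fold (Xp e). assert (HXe := XpD e De).
    unfold Xp in *. field; split; auto. }
  assert (L5 : limit1_in (fun e => g5 e / e) Dom (Zp2 - dQ0 * Tp0) 0).
  { assert (K := lim_mult _ _ _ _ _ (lim_minus _ _ _ _ _ (lim_plus _ _ _ _ _ (lim_const Dom Zp2) Ld2)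
        (lim_mult _ _ _ _ _ (lim_const Dom dQ0) (lim_plus _ _ _ _ _ (lim_const Dom Tp0) Ld0))) LiXp).
    replace (Zp2 - dQ0 * Tp0) with ((Zp2 + 0 - dQ0 * (Tp0 + 0)) * 1) by ring.
    eapply lim_ext; [|exact K]. intros e De. unfold g5. fold (Xp e). assert (HXe := XpD e De).
    unfold Xp in *. field; split; auto. }
  assert (HP := C15_hasP L HL).
  assert (LO := olim5 L _ _ _ _ _ HP x0 q0 Q0 dq0 dQ0
     (C15_cont L 1 HL ltac:(lia) _ _ _ _ _) (C15_cont L 2 HL ltac:(lia) _ _ _ _ _)
     (C15_cont L 3 HL ltac:(lia) _ _ _ _ _) (C15_cont L 4 HL ltac:(lia) _ _ _ _ _)
     (C15_cont L 5 HL ltac:(lia) _ _ _ _ _) Dom g1 g2 g3 g4 g5 _ _ _ _ _ HD L1 L2 L3 L4 L5).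
  set (LP := L x0 q0 Q0 dq0 dQ0).
  assert (LPhi := lim_plus _ _ _ _ _ (lim_mult _ _ _ _ _ LO LXp)
      (lim_mult _ _ _ _ _ (lim_const Dom LP) (lim_plus _ _ _ _ _ (lim_const Dom Tp0) Ld0))).
  assert (LZ : limit1_in (fun e => (L (x0 + g1 e) (q0 + g2 e) (Q0 + g3 e) (dq0 + g4 e) (dQ0 + g5 e) - LP) / e * Xp e
        + LP * (Tp0 + drho0 e x0 / e)) Dom 0 0).
  { eapply lim_ext; [|exact (lim_const Dom 0)]. intros e De. cbv beta.
    assert (PW := pointwise_eps e x0 ltac:(unfold Dom in De; lra) Hx0
       ltac:(intros x Hx; assert (H' := Xp_pos e x De Hx); lra)).
    assert (E : L (x0 + g1 e) (q0 + g2 e) (Q0 + g3 e) (dq0 + g4 e) (dQ0 + g5 e) =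
      L (Xt e x0) (A1 e x0) (A2 e x0) (A1p e x0 / Xtp e x0) (A2p e x0 / Xtp e x0)).
    { unfold g1, g2, g3, g4, g5, Xt, A1, A2, A1p, A2p, Xtp, Xp. f_equal; unfold T0, Z1, Z2, q0, Q0, dq0, dQ0, Tp0, Zp1, Zp2; ring. }
    rewrite E. unfold along in PW. fold q0 Q0 dq0 dQ0 LP in PW.
    set (W := L (Xt e x0) (A1 e x0) (A2 e x0) (A1p e x0 / Xtp e x0) (A2p e x0 / Xtp e x0)) in *.
    unfold Xtp in PW. fold Tp0 in PW. rewrite PW. unfold Xp.
    assert (ne := HD e De). field; exact ne. }
  assert (Adh : adhDa Dom 0).
  { intros al Hal. exists (Rmin al e0 / 2).
    assert (Rmin al e0 <= e0) by apply Rmin_r. assert (Rmin al e0 <= al) by apply Rmin_l.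
    assert (0 < Rmin al e0) by (apply Rmin_pos; lra). split.
    - unfold Dom. lra.
    - unfold Rdist. rewrite Rminus_0_r, Rabs_right; lra. }
  assert (U := single_limit _ _ _ _ _ Adh LPhi LZ).
  unfold Ef. unfold along. fold q0 Q0 dq0 dQ0 LP. fold T0 Z1 Z2 Tp0 Zp1 Zp2.
  rewrite <- U. ring.
Qed.

End Main.


Lemma zero_closed (E : R -> R) a b x : a < b -> (forall y, continuity_pt E y) -> (forall y, a < y < b -> E y = 0) ->
  a <= x <= b -> E x = 0.
Proof.
  intros Hab HC HZ Hx.
  destruct (Req_dec (E x) 0) as [|Hne]; auto. exfalso.
  assert (Hp : 0 < Rabs (E x)) by (apply Rabs_pos_lt; auto).
  destruct (cont_elim _ _ (HC x) _ Hp) as [d [Hd Hb]].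
  set (k := Rmin d (b - a) / 4).
  assert (M1 := Rmin_l d (b - a)). assert (M2 := Rmin_r d (b - a)).
  assert (Hk : 0 < k) by (unfold k; assert (0 < Rmin d (b - a)) by (apply Rmin_pos; lra); lra).
  destruct (Rle_dec x ((a + b) / 2)) as [Hl|Hr].
  - specialize (Hb (x + k)). rewrite HZ in Hb by (unfold k in *; lra).
    replace (x + k - x) with k in Hb by ring. rewrite Rabs_right in Hb by lra.
    rewrite Rminus_0_l, Rabs_Ropp in Hb. unfold k in *. lra.
  - specialize (Hb (x - k)). rewrite HZ in Hb by (unfold k in *; lra).
    replace (x - k - x) with (- k) in Hb by ring. rewrite Rabs_Ropp, Rabs_right in Hb by lra.
    rewrite Rminus_0_l, Rabs_Ropp in Hb. unfold k in *. lra.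
Qed.

Theorem mainTheorem3 (a b : R) (Ll Lu : R -> fun5) (tau : fun3)
    (zl zu : R -> fun3) :
  a < b ->
  (forall r, 0 <= r <= 1 -> C2_5 (Ll r) /\ C2_5 (Lu r)) ->
  C1_3 tau ->
  (forall r, 0 <= r <= 1 -> C1_3 (zl r) /\ C1_3 (zu r)) ->
  fuzzy_invariant a b Ll Lu tau zl zu ->
  forall (qt ql qu : R -> R -> R),
    fuzzy_valued_with_levels a b qt ql qu ->
    C2_levels ql qu ->
    fuzzy_EL a b Ll Lu ql qu ->
    forall r, 0 <= r <= 1 -> forall x, a <= x <= b ->
      derivable_pt_lim (noether_C (Ll r) tau (zl r) (zu r) (ql r) (qu r)) x 0 /\
      derivable_pt_lim (noether_C (Lu r) tau (zl r) (zu r) (ql r) (qu r)) x 0.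
Proof.
  intros Hab HL2 Ht Hz Hinv qt ql qu Hfv HC2 HEL r Hr x Hx.
  destruct (HL2 r Hr) as [[HLl _] [HLu _]].
  destruct (Hz r Hr) as [Hzl Hzu]. destruct (HC2 r Hr) as [Hq HQ].
  destruct (Hinv qt ql qu Hfv HC2 r Hr) as
    [X [Ql [Qu [rho0 [rho1 [rho2 [drho0 [drho1 [drho2 [R0 [R1 [R2 [Hspec Hint]]]]]]]]]]]]].
  destruct (HEL r Hr x Hx) as [E1 [E2 [E3 E4]]].
  split.
  - eapply dval; [apply noether_der; eauto|].
    apply (zero_closed (Ef (Ll r) tau (zl r) (zu r) (ql r) (qu r)) a b x); auto.
    + intro y. apply Ef_cont; auto.
    + intros y Hy. apply (Ef_zero a b (Ll r) tau (zl r) (zu r) (ql r) (qu r) X Ql Qu rho0 rho1 rho2 drho0 drho1 drho2);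
        auto.
      intros eps ta tb He H1 H2 H3. apply (Hint eps ta tb He H1 H2 H3).
  - eapply dval; [apply noether_der; eauto|].
    apply (zero_closed (Ef (Lu r) tau (zl r) (zu r) (ql r) (qu r)) a b x); auto.
    + intro y. apply Ef_cont; auto.
    + intros y Hy. apply (Ef_zero a b (Lu r) tau (zl r) (zu r) (ql r) (qu r) X Ql Qu rho0 rho1 rho2 drho0 drho1 drho2);
        auto.
      intros eps ta tb He H1 H2 H3. apply (Hint eps ta tb He H1 H2 H3).
Qed.
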